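(* Let $0\le\alpha\le\beta\le\pi/2$, $P_1,P_2>0$, and define $\mathcal R(\theta)$ as in the context. Then the maximum of $R_1$ over $\bigcup_{\theta\in[\alpha,\beta]}\mathcal R(\theta)$ equals $\mathcal C(\phi_1(\alpha))$ and the maximum of $R_2$ over this set equals $\mathcal C(\phi_2(\beta))$.
   Context: $\mathcal C(x)=\frac12\log_2(1+x)$, $\phi_1(\theta)=P_1\cos^2(\theta-\alpha)$, $\phi_2(\theta)=P_2\cos^2(\theta-\beta)$, $\phi=\phi_1+\phi_2$, and $\mathcal R(\theta)=\{(R_1,R_2)\ge0:R_1\le\mathcal C(\phi_1(\theta)),R_2\le\mathcal C(\phi_2(\theta)),R_1+R_2\le\mathcal C(\phi(\theta))\}$. (In the two-hop MAC, $P_i=\|\mathbf h_{0i}\|^2P_{S_i}$ and $\bigcup_{\theta\in[\alpha,\beta]}\mathcal R(\theta)$ is the first outer bound.) *)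

(* Defs.v *)
From Stdlib Require Import Reals.
Open Scope R_scope.

Definition log2 (x : R) : R := ln x / ln 2.

Definition Cap (x : R) : R := / 2 * log2 (1 + x).

Definition phi1 (P1 alpha theta : R) : R := P1 * (cos (theta - alpha)) ^ 2.
Definition phi2 (P2 beta theta : R) : R := P2 * (cos (theta - beta)) ^ 2.
Definition phi (P1 P2 alpha beta theta : R) : R :=
  phi1 P1 alpha theta + phi2 P2 beta theta.

Definition region (P1 P2 alpha beta theta : R) (R1 R2 : R) : Prop :=
  0 <= R1 /\ 0 <= R2 /\
  R1 <= Cap (phi1 P1 alpha theta) /\
  R2 <= Cap (phi2 P2 beta theta) /\
  R1 + R2 <= Cap (phi P1 P2 alpha beta theta).

Definition union_region (P1 P2 alpha beta : R) (R1 R2 : R) : Prop :=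
  exists theta, alpha <= theta <= beta /\ region P1 P2 alpha beta theta R1 R2.

Definition is_max_over (S : R -> R -> Prop) (f : R -> R -> R) (m : R) : Prop :=
  (exists R1 R2, S R1 R2 /\ f R1 R2 = m) /\
  (forall R1 R2, S R1 R2 -> f R1 R2 <= m).

(* Main.v *)
Require Import Defs.
From Stdlib Require Import Reals Lra.
Open Scope R_scope.

Lemma ln2_pos : 0 < ln 2.
Proof. rewrite <- ln_1. apply ln_increasing; lra. Qed.

Lemma Cap_le x y : 0 <= x -> x <= y -> Cap x <= Cap y.
Proof.
  intros hx hxy. unfold Cap, log2.
  assert (ln (1+x) <= ln (1+y)).
  { destruct (Req_dec x y) as [->|hne]; [lra|]. left; apply ln_increasing; lra. }
  pose proof ln2_pos.
  apply Rmult_le_compat_l; [lra|].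
  unfold Rdiv; apply Rmult_le_compat_r; [left; apply Rinv_0_lt_compat; lra| lra].
Qed.

Lemma Cap0 : Cap 0 = 0.
Proof. unfold Cap, log2. rewrite Rplus_0_r, ln_1. field. pose proof ln2_pos; lra. Qed.

Lemma cos2_bd t : 0 <= cos t ^ 2 <= 1.
Proof. pose proof (COS_bound t). split; nra. Qed.

Theorem lemma6 (alpha beta P1 P2 : R)
  (h0a : 0 <= alpha) (hab : alpha <= beta) (hb : beta <= PI / 2)
  (hP1 : 0 < P1) (hP2 : 0 < P2) :
  is_max_over (union_region P1 P2 alpha beta) (fun R1 _ => R1)
    (Cap (phi1 P1 alpha alpha)) /\
  is_max_over (union_region P1 P2 alpha beta) (fun _ R2 => R2)
    (Cap (phi2 P2 beta beta)).
Proof.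
  assert (E1 : phi1 P1 alpha alpha = P1).
  { unfold phi1. rewrite Rminus_diag, cos_0. ring. }
  assert (E2 : phi2 P2 beta beta = P2).
  { unfold phi2. rewrite Rminus_diag, cos_0. ring. }
  rewrite E1, E2.
  assert (B1 : forall t, 0 <= phi1 P1 alpha t <= P1).
  { intro t; unfold phi1; pose proof (cos2_bd (t - alpha)); split; nra. }
  assert (B2 : forall t, 0 <= phi2 P2 beta t <= P2).
  { intro t; unfold phi2; pose proof (cos2_bd (t - beta)); split; nra. }
  split; split.
  - exists (Cap P1), 0. split; [|reflexivity].
    exists alpha. split; [lra|].
    pose proof (B2 alpha).
    unfold region. repeat split.
    + rewrite <- Cap0; apply Cap_le; lra.
    + lra.
    + rewrite E1; lra.
    + rewrite <- Cap0; apply Cap_le; lra.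
    + rewrite Rplus_0_r. unfold phi. rewrite E1. apply Cap_le; lra.
  - intros R1 R2 [t [ht [_ [_ [h _]]]]]. simpl.
    eapply Rle_trans; [exact h|]. apply Cap_le; apply B1.
  - exists 0, (Cap P2). split; [|reflexivity].
    exists beta. split; [lra|].
    pose proof (B1 beta).
    unfold region. repeat split.
    + lra.
    + rewrite <- Cap0; apply Cap_le; lra.
    + rewrite <- Cap0; apply Cap_le; lra.
    + rewrite E2; lra.
    + rewrite Rplus_0_l. unfold phi. rewrite E2. apply Cap_le; lra.
  - intros R1 R2 [t [ht [_ [_ [_ [h _]]]]]]. simpl.
    eapply Rle_trans; [exact h|]. apply Cap_le; apply B2.
Qed.
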